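(* Let $R$ be a generalized p.q.-Baer $*$-ring whose projections form a lattice. The following are equivalent: (1) $R$ satisfies the parallelogram law; (2) whenever projections $e,f\in R$ are in position $p'$, $e\sim f$.
   Context: A $*$-ring is a ring with an involution; a projection is $e$ with $e=e^*=e^2$, ordered by $e\le f\iff e=ef$. $R$ is a generalized p.q.-Baer $*$-ring if for every $x\in R$ there are $n\in\mathbb N$ and a projection $e$ with $r_R((xR)^n)=eR$, where $r_R(S)=\{a: sa=0\ \forall s\in S\}$. Projections $e,f$ are equivalent, $e\sim f$, if there is $w\in R$ with $w^*w=e$ and $ww^*=f$. A $*$-ring whose projections form a lattice satisfies the parallelogram law if $e-e\wedge f\sim e\vee f-f$ for all projections $e,f$. Projections $e,f$ in a $*$-ring with unity whose projections form a lattice are in position $p'$ if $e\wedge(1-f)=(1-e)\wedge f=0$. In the paper, the lattice operations are related to generalized central covers $GC$ (smallest central projection $e$ with $x^ne=x^n$ for some $n$) by $e\vee f=f+GC(e(1-f))$ and $e\wedge f=e-GC(e(1-f))$. *)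

(* Defs.v *)
From mathcomp Require Import all_boot all_order all_algebra.
Set Implicit Arguments. Unset Strict Implicit. Unset Printing Implicit Defensive.
Import GRing.Theory.
Local Open Scope ring_scope.

Definition is_involution (R : nzRingType) (star : R -> R) : Prop :=
  [/\ forall x y, star (x + y) = star x + star y,
      forall x y, star (x * y) = star y * star x
    & forall x, star (star x) = x].

Section StarRing.
Variables (R : nzRingType) (star : R -> R).

Definition is_proj (e : R) : Prop := e = star e /\ e = e * e.

Definition proj_le (e f : R) : Prop := e = e * f.

(* the set (xR)^n : finite sums of products y_1 ... y_n with y_i in xR *)
Definition prod_xR (x : R) (n : nat) (z : R) : Prop :=
  exists rs : n.-tuple R, z = \prod_(r <- rs) (x * r).
Definition pow_xR (x : R) (n : nat) (z : R) : Prop :=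
  exists s : seq R, (forall y, y \in s -> prod_xR x n y) /\ z = \sum_(y <- s) y.

Definition rann (S : R -> Prop) (a : R) : Prop := forall s, S s -> s * a = 0.

Definition rideal (e : R) (a : R) : Prop := exists r, a = e * r.

Definition gen_pq_baer : Prop :=
  forall x : R, exists n : nat, exists e : R,
    (0 < n)%N /\ is_proj e /\ (forall a, rann (pow_xR x n) a <-> rideal e a).

Definition is_meet (e f m : R) : Prop :=
  [/\ is_proj m, proj_le m e, proj_le m f &
      forall g, is_proj g -> proj_le g e -> proj_le g f -> proj_le g m].
Definition is_join (e f j : R) : Prop :=
  [/\ is_proj j, proj_le e j, proj_le f j &
      forall g, is_proj g -> proj_le e g -> proj_le f g -> proj_le j g].

Definition proj_lattice : Prop :=
  forall e f, is_proj e -> is_proj f ->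
    (exists m, is_meet e f m) /\ (exists j, is_join e f j).

Definition proj_equiv (e f : R) : Prop :=
  exists w, star w * w = e /\ w * star w = f.

Definition parallelogram_law : Prop :=
  forall e f m j, is_proj e -> is_proj f -> is_meet e f m -> is_join e f j ->
    proj_equiv (e - m) (j - f).

Definition position_p' (e f : R) : Prop :=
  is_meet e (1 - f) 0 /\ is_meet (1 - e) f 0.

End StarRing.

(* Main.v *)
Require Import Defs.
From mathcomp Require Import all_boot all_order all_algebra.
Local Open Scope ring_scope.
Import GRing.Theory.

Set Implicit Arguments.
Section S.
Variables (R : nzRingType) (star : R -> R).
Hypothesis Hs : is_involution star.

Lemma starD x y : star (x + y) = star x + star y. Proof. by case: Hs. Qed.
Lemma starM x y : star (x * y) = star y * star x. Proof. by case: Hs. Qed.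
Lemma starK x : star (star x) = x. Proof. by case: Hs. Qed.
Lemma star0 : star 0 = 0.
Proof. have h := starD 0 0; rewrite addr0 -{1}(addr0 (star 0)) in h. by apply: esym; apply: addrI h. Qed.
Lemma starN x : star (- x) = - star x.
Proof. have h := starD x (- x); rewrite subrr star0 in h. by apply/eqP; rewrite -addr_eq0 addrC -h. Qed.
Lemma starB x y : star (x - y) = star x - star y.
Proof. by rewrite starD starN. Qed.
Lemma star1 : star 1 = 1.
Proof. have h := starM (star 1) 1; rewrite mulr1 starK mulr1 in h; by rewrite -h. Qed.

Lemma leS e g : is_proj star e -> is_proj star g -> proj_le e g -> e = g * e.
Proof. move=> [He _] [Hg _] h. by have := congr1 star h; rewrite starM -He -Hg. Qed.
Lemma leS' e g : is_proj star e -> is_proj star g -> e = g * e -> proj_le e g.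
Proof. move=> [He _] [Hg _] h. by have := congr1 star h; rewrite starM -He -Hg. Qed.

Lemma projC e : is_proj star e -> is_proj star (1 - e).
Proof.
move=> [He He2]; split; first by rewrite starB star1 -He.
by rewrite mulrBr mulr1 mulrBl mul1r -He2 subrr subr0.
Qed.

Lemma proj0 : is_proj star 0.
Proof. by split; rewrite ?star0 ?mulr0. Qed.

Lemma orth e g : is_proj star e -> is_proj star g -> g * e = 0 -> e * g = 0.
Proof. move=> [He _] [Hg _] h. by rewrite He Hg -starM h star0. Qed.

Lemma meet0 e f : is_proj star e -> is_proj star f ->
  (forall g, is_proj star g -> proj_le g e -> proj_le g f -> g = 0) ->
  is_meet star e f 0.
Proof.
move=> He Hf H; split; rewrite /proj_le ?mul0r //; first exact: proj0.
by move=> g Hg h1 h2; rewrite (H g Hg h1 h2) mul0r.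
Qed.

Lemma projB e m : is_proj star e -> is_proj star m -> proj_le m e ->
  is_proj star (e - m).
Proof.
move=> He Hm h; have h' := leS Hm He h.
case: He => He He2; case: Hm => Hm Hm2; split; first by rewrite starB -He -Hm.
by rewrite mulrBr !mulrBl -He2 -Hm2 -h -h' subrr subr0.
Qed.
End S.
Unset Implicit Arguments.

Theorem mainTheorem12 (R : nzRingType) (star : R -> R) :
  is_involution star ->
  gen_pq_baer star ->
  proj_lattice star ->
  (parallelogram_law star <->
   (forall e f : R, is_proj star e -> is_proj star f ->
      position_p' star e f -> proj_equiv star e f)).
Proof.
move=> Hs _ Hlat; split.
- move=> PL e f He Hf [M1 M2].
  have Hf' := projC Hs Hf.
  have [_ [j Hj]] := Hlat e (1 - f) He Hf'.
  have := PL e (1 - f) 0 j He Hf' M1 Hj.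
  suff -> : j = 1 by rewrite subr0 subKr.
  case: Hj => Hjp hej hfj _.
  case: M2 => _ _ _ M.
  have Hcj := projC Hs Hjp.
  have h := M (1 - j) Hcj.
  have l1 : proj_le (1 - j) (1 - e).
    rewrite /proj_le mulrBr mulr1 mulrBl mul1r -(leS Hs He Hjp hej) subrr subr0 //.
  have l2 : proj_le (1 - j) f.
    rewrite /proj_le.
    have e2 := leS Hs Hf' Hjp hfj.
    have jf : j * f = j - (1 - f) by rewrite e2 mulrBr mulr1 subKr.
    by rewrite mulrBl mul1r jf opprB addrA subrKC.
  have := h l1 l2; rewrite /proj_le mulr0 => /eqP; rewrite subr_eq0 => /eqP.
  by [].
- move=> H e f m j He Hf [Hm hme hmf Mm] [Hj hej hfj Mj].
  apply: H.
  + exact: projB.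
  + exact: projB.
  have em := leS Hs Hm He hme.
  have fm := leS Hs Hm Hf hmf.
  have jf := leS Hs Hf Hj hfj.
  have je := leS Hs He Hj hej.
  have [_ He2] := He; have [_ Hf2] := Hf; have [_ Hj2] := Hj.
  have Hp := projB Hs He Hm hme.
  have Hq := projB Hs Hj Hf hfj.
  split.
  + apply: meet0 => //; first exact: projC.
    move=> g Hg gp gq.
    have ge : g * e = g by rewrite {1}gp -mulrA mulrBl -He2 -hme -gp.
    have gj : g * j = g by rewrite -{1}ge -mulrA -hej ge.
    have gf : g * f = g by have := esym gq; rewrite mulrBr mulr1 mulrBr gj subKr.
    have gm := Mm g Hg (esym ge) (esym gf).
    by rewrite gp mulrBr ge -gm subrr.
  + apply: meet0 => //; first exact: projC.
    move=> g Hg g1 g2.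
    have gj : g * j = g by rewrite {1}g2 -mulrA mulrBl -Hj2 -hfj -g2.
    have gf0 : g * f = 0 by rewrite g2 -mulrA mulrBl -jf -Hf2 subrr mulr0.
    have gm0 : g * m = 0 by rewrite fm mulrA gf0 mul0r.
    have ge0 : g * e = 0.
      by rewrite {1}g1 -mulrA mulrBl mul1r mulrBl -He2 -hme subKr gm0.
    have eg0 := orth Hs He Hg ge0.
    have fg0 := orth Hs Hf Hg gf0.
    have jg := leS Hs Hg Hj (esym gj).
    have Hjg := projB Hs Hj Hg (esym gj).
    have h : proj_le j (j - g).
      apply: Mj => //; rewrite /proj_le mulrBr.
      - by rewrite -hej eg0 subr0.
      - by rewrite -hfj fg0 subr0.
    rewrite /proj_le mulrBr -Hj2 -jg in h.
    have h2 : (j - g) - j = 0 by rewrite -h subrr.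
    rewrite addrAC subrr add0r in h2.
    by apply/eqP; rewrite -oppr_eq0 h2.
Qed.
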